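(* Let $(X,d)$ be a complete metric space and let $G:X\times X\to X$ be a mapping such that (i) $G(x,x)=x$ for all $x\in X$, and (ii) for $x,y\in X$, $G(x,y)=x$ implies $y=x$. Let $T:X\to P_{cl}(X)$ be a multivalued operator with $SFix(T)\neq\emptyset$ and let $T_G(x)=\{G(x,u):u\in T(x)\}$ be the admissible perturbation of $T$ corresponding to $G$. Suppose there exist $\alpha,\beta,\gamma\ge0$ with $\alpha+\beta+\gamma<1$ such that $$H(T_G(x),T_G(y))\le\alpha d(x,y)+\beta D(x,T_G(y))+\gamma D(y,T_G(x))\quad\text{for all }x,y\in X,$$ and that (iii) there exists $L>0$ with $D(x,T_G(x))\le L\,D(x,T(x))$ for every $x\in X$. Then the strict fixed point problem $T(x)=\{x\}$ is Ulam–Hyers stable: there exists $c>0$ such that for every $\varepsilon>0$ and every $y^*\in X$ with $D(y^*,T(y^* ))\le\varepsilon$ there exists $x^*\in SFix(T)$ with $d(y^*,x^* )\le c\varepsilon$.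
   Context: $P_{cl}(X)$ is the family of nonempty closed subsets of $X$; $SFix(T)=\{x:T(x)=\{x\}\}$. For nonempty $A,B\subseteq X$: $D(a,B)=\inf_{b\in B}d(a,b)$, $e(A,B)=\sup_{a\in A}D(a,B)$, $H(A,B)=\max\{e(A,B),e(B,A)\}$. *)

(* Defs.v *)
From Stdlib Require Import Reals.
From Coquelicot Require Import Coquelicot.
Open Scope R_scope.

Definition is_metric {X : Type} (d : X -> X -> R) : Prop :=
  (forall x y, 0 <= d x y) /\
  (forall x y, d x y = 0 <-> x = y) /\
  (forall x y, d x y = d y x) /\
  (forall x y z, d x z <= d x y + d y z).

Definition cauchy_seq {X : Type} (d : X -> X -> R) (u : nat -> X) : Prop :=
  forall eps, 0 < eps -> exists N, forall m n, (N <= m)%nat -> (N <= n)%nat ->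
    d (u m) (u n) < eps.

Definition seq_converges_to {X : Type} (d : X -> X -> R) (u : nat -> X) (l : X) : Prop :=
  forall eps, 0 < eps -> exists N, forall n, (N <= n)%nat -> d (u n) l < eps.

Definition complete_metric {X : Type} (d : X -> X -> R) : Prop :=
  forall u, cauchy_seq d u -> exists l, seq_converges_to d u l.

Definition closed_set {X : Type} (d : X -> X -> R) (A : X -> Prop) : Prop :=
  forall x, (forall eps, 0 < eps -> exists a, A a /\ d x a < eps) -> A x.

Definition nonempty_set {X : Type} (A : X -> Prop) : Prop := exists a, A a.

Definition in_Pcl {X : Type} (d : X -> X -> R) (A : X -> Prop) : Prop :=
  nonempty_set A /\ closed_set d A.

(* D(a,B) = inf_{b in B} d(a,b); real-valued (meaningful for nonempty B,
   where the infimum is finite since distances are >= 0) *)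
Definition Dist {X : Type} (d : X -> X -> R) (a : X) (B : X -> Prop) : R :=
  real (Glb_Rbar (fun r => exists b, B b /\ r = d a b)).

Definition excess {X : Type} (d : X -> X -> R) (A B : X -> Prop) : Rbar :=
  Lub_Rbar (fun r => exists a, A a /\ r = Dist d a B).

Definition Hausdorff {X : Type} (d : X -> X -> R) (A B : X -> Prop) : Rbar :=
  let e1 := excess d A B in let e2 := excess d B A in
  if Rbar_le_dec e1 e2 then e2 else e1.

Definition SFix {X : Type} (T : X -> X -> Prop) (x : X) : Prop :=
  forall z, T x z <-> z = x.

Definition TG {X : Type} (G : X -> X -> X) (T : X -> X -> Prop) (x : X) : X -> Prop :=
  fun z => exists u, T x u /\ z = G x u.

(* Main.v *)
Require Import Defs.
From Stdlib Require Import Reals Lra Psatz.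
From Coquelicot Require Import Coquelicot.
Open Scope R_scope.

Lemma Dist_le {X : Type} (d : X -> X -> R) (a b : X) (B : X -> Prop) :
  (forall x y, 0 <= d x y) -> B b -> Dist d a B <= d a b.
Proof.
  intros Hpos Hb. unfold Dist.
  destruct (Glb_Rbar_correct (fun r => exists b, B b /\ r = d a b)) as [H1 H2].
  assert (Hlo : Rbar_le (Finite 0) (Glb_Rbar (fun r => exists b, B b /\ r = d a b))).
  { apply H2. intros r [b' [_ ->]]. simpl. apply Hpos. }
  assert (Hup : Rbar_le (Glb_Rbar (fun r => exists b, B b /\ r = d a b)) (Finite (d a b))).
  { apply H1. exists b. auto. }
  destruct (Glb_Rbar (fun r => exists b, B b /\ r = d a b)); simpl in *; tauto.
Qed.

Lemma Dist_ge {X : Type} (d : X -> X -> R) (a b0 : X) (B : X -> Prop) (m : R) :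
  B b0 -> (forall b, B b -> m <= d a b) -> m <= Dist d a B.
Proof.
  intros Hb0 Hm. unfold Dist.
  destruct (Glb_Rbar_correct (fun r => exists b, B b /\ r = d a b)) as [H1 H2].
  assert (Hlo : Rbar_le (Finite m) (Glb_Rbar (fun r => exists b, B b /\ r = d a b))).
  { apply H2. intros r [b' [Hb' ->]]. simpl. apply Hm; auto. }
  assert (Hup : Rbar_le (Glb_Rbar (fun r => exists b, B b /\ r = d a b)) (Finite (d a b0))).
  { apply H1. exists b0. auto. }
  destruct (Glb_Rbar (fun r => exists b, B b /\ r = d a b)); simpl in *; tauto.
Qed.

Lemma excess_ge {X : Type} (d : X -> X -> R) (A B : X -> Prop) (z : X) :
  A z -> Rbar_le (Finite (Dist d z B)) (excess d A B).
Proof.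
  intros Hz. unfold excess.
  destruct (Lub_Rbar_correct (fun r => exists a, A a /\ r = Dist d a B)) as [H1 _].
  apply H1. exists z. auto.
Qed.

Lemma Haus_ge {X : Type} (d : X -> X -> R) (A B : X -> Prop) :
  Rbar_le (excess d A B) (Hausdorff d A B).
Proof.
  unfold Hausdorff. destruct (Rbar_le_dec (excess d A B) (excess d B A)); auto.
  apply Rbar_le_refl.
Qed.

Theorem mainTheorem5 (X : Type) (d : X -> X -> R)
  (Hmet : is_metric d) (Hcomp : complete_metric d)
  (G : X -> X -> X)
  (HG1 : forall x, G x x = x)
  (HG2 : forall x y, G x y = x -> y = x)
  (T : X -> X -> Prop)
  (HT : forall x, in_Pcl d (T x))
  (HSF : exists x, SFix T x)
  (alpha beta gamma : R)
  (Ha : 0 <= alpha) (Hb : 0 <= beta) (Hc : 0 <= gamma)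
  (Habc : alpha + beta + gamma < 1)
  (Hcontr : forall x y,
     Rbar_le (Hausdorff d (TG G T x) (TG G T y))
             (Finite (alpha * d x y + beta * Dist d x (TG G T y)
                      + gamma * Dist d y (TG G T x))))
  (HL : exists L, 0 < L /\ forall x, Dist d x (TG G T x) <= L * Dist d x (T x)) :
  exists c, 0 < c /\
    forall eps, 0 < eps -> forall ystar,
      Dist d ystar (T ystar) <= eps ->
      exists xstar, SFix T xstar /\ d ystar xstar <= c * eps.
Proof.
  destruct Hmet as [Hpos [Hzero [Hsym Htri]]].
  destruct HSF as [xs Hxs]. destruct HL as [L [HL0 HL]].
  exists (L / (1 - alpha - beta - gamma)). split.
  { apply Rdiv_lt_0_compat; lra. }
  intros eps Heps y Hy. exists xs. split; auto.
  assert (HTxs : TG G T xs xs).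
  { exists xs. split; [apply Hxs; auto | rewrite HG1; auto]. }
  assert (HTxs' : forall b, TG G T xs b -> b = xs).
  { intros b [u [Hu ->]]. apply Hxs in Hu. subst. apply HG1. }
  destruct (HT y) as [[u0 Hu0] _].
  assert (Hne : TG G T y (G y u0)) by (exists u0; auto).
  set (k := 1 - alpha - beta - gamma).
  assert (Hm : k * d y xs <= Dist d y (TG G T y)).
  { apply (Dist_ge _ _ _ _ _ Hne). intros z Hz.
    assert (H1 : d z xs <= Dist d z (TG G T xs)).
    { apply (Dist_ge _ _ _ _ _ HTxs). intros b Hb'. rewrite (HTxs' b Hb'). lra. }
    assert (H2 := excess_ge d (TG G T y) (TG G T xs) z Hz).
    assert (H3 := Haus_ge d (TG G T y) (TG G T xs)).
    assert (H4 := Hcontr y xs).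
    assert (H5 : Rbar_le (Finite (Dist d z (TG G T xs)))
      (Finite (alpha * d y xs + beta * Dist d y (TG G T xs)
                      + gamma * Dist d xs (TG G T y)))).
    { eapply Rbar_le_trans; [exact H2|]. eapply Rbar_le_trans; [exact H3|]. exact H4. }
    simpl in H5.
    assert (H6 : Dist d y (TG G T xs) <= d y xs) by (apply Dist_le; auto).
    assert (H7 : Dist d xs (TG G T y) <= d xs z) by (apply Dist_le; auto).
    assert (H8 := Htri y z xs). rewrite (Hsym xs z) in H7.
    assert (0 <= Dist d y (TG G T xs)) by (apply (Dist_ge _ _ _ _ _ HTxs); auto).
    assert (beta * Dist d y (TG G T xs) <= beta * d y xs) by (apply Rmult_le_compat_l; auto).
    assert (gamma * Dist d xs (TG G T y) <= gamma * d z xs) by (apply Rmult_le_compat_l; auto).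
    assert (Hdz : d z xs <= alpha * d y xs + beta * d y xs + gamma * d z xs) by lra.
    assert (Hm1 : (1 - gamma) * d y xs <= (1 - gamma) * (d y z + d z xs)) by (apply Rmult_le_compat_l; lra).
    assert (0 <= gamma * d y z) by (apply Rmult_le_pos; auto).
    assert (0 <= d y xs) by auto.
    unfold k; ring_simplify; lra. }
  assert (HLe : L * Dist d y (T y) <= L * eps) by (apply Rmult_le_compat_l; lra).
  assert (Hk : 0 < k) by (unfold k; lra).
  specialize (HL y).
  apply (Rmult_le_reg_l k); auto.
  replace (k * (L / k * eps)) with (L * eps) by (field; lra). lra.
Qed.
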